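(* Let $N\ge 1$ and let $\lambda,\mu$ be complex parameters. Consider fields $x,\widetilde{x},\widehat{x},\widehat{\widetilde{x}}\in\mathbb{C}^N$ with indices taken modulo $N$. Suppose that $x,\widetilde{x},\widehat{x}$ satisfy, for all $k$, $$(E)\qquad \big(e^{\widetilde{x}_k-x_k}-1\big)\big(\lambda+e^{x_k-\widetilde{x}_{k-1}}\big)=\big(e^{\widehat{x}_k-x_k}-1\big)\big(\mu+e^{x_k-\widehat{x}_{k-1}}\big).$$ Consider the superposition formulas $$(S1)\qquad \big(e^{\widehat{\widetilde{x}}_k-\widehat{x}_k}-1\big)\big(\lambda+e^{x_{k+1}-\widetilde{x}_k}\big)=\big(e^{\widehat{\widetilde{x}}_k-\widetilde{x}_k}-1\big)\big(\mu+e^{x_{k+1}-\widehat{x}_k}\big),$$ $$(S2)\qquad \big(e^{\widetilde{x}_{k+1}-x_{k+1}}-1\big)\big(\lambda+e^{\widehat{x}_{k+1}-\widehat{\widetilde{x}}_k}\big)=\big(e^{\widehat{x}_{k+1}-x_{k+1}}-1\big)\big(\mu+e^{\widetilde{x}_{k+1}-\widehat{\widetilde{x}}_k}\big).$$ Then, by virtue of $(E)$, (S1) and (S2) are equivalent, and if $\widehat{\widetilde{x}}$ is defined by either of them, then for all $k$: $$(E_1)\quad \big(e^{\widetilde{x}_k-x_k}-1\big)\big(\lambda+e^{x_{k+1}-\widetilde{x}_k}\big)=\big(e^{\widehat{\widetilde{x}}_k-\widetilde{x}_k}-1\big)\big(\mu+e^{\widetilde{x}_k-\widehat{\widetilde{x}}_{k-1}}\big),$$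 $$(E_2)\quad \big(e^{\widehat{x}_k-x_k}-1\big)\big(\mu+e^{x_{k+1}-\widehat{x}_k}\big)=\big(e^{\widehat{\widetilde{x}}_k-\widehat{x}_k}-1\big)\big(\lambda+e^{\widehat{x}_k-\widehat{\widetilde{x}}_{k-1}}\big),$$ $$(E_{12})\quad \big(e^{\widehat{\widetilde{x}}_k-\widehat{x}_k}-1\big)\big(\lambda+e^{\widehat{x}_{k+1}-\widehat{\widetilde{x}}_k}\big)=\big(e^{\widehat{\widetilde{x}}_k-\widetilde{x}_k}-1\big)\big(\mu+e^{\widetilde{x}_{k+1}-\widehat{\widetilde{x}}_k}\big).$$
   Context: These are the corner equations for two Bäcklund transformations $F_\lambda,F_\mu$ of the periodic modified Toda lattice $\ddot x_k=\dot x_k(e^{x_{k+1}-x_k}-e^{x_k-x_{k-1}})$, where $F_\lambda:(x,p)\mapsto(\widetilde x,\widetilde p)$ is given by $e^{p_k}=(e^{\widetilde x_k-x_k}-1)(\lambda+e^{x_k-\widetilde x_{k-1}})$, $e^{\widetilde p_k}=(e^{\widetilde x_k-x_k}-1)(\lambda+e^{x_{k+1}-\widetilde x_k})$; hats denote the action of $F_\mu$. *)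

(* Defs.v *)
From Stdlib Require Import Reals ZArith.
From Coquelicot Require Import Coquelicot.

Definition cexp (z : C) : C :=
  (exp (Re z) * cos (Im z), exp (Re z) * sin (Im z))%R.

(* A field on the periodic lattice Z/NZ, represented as an N-periodic map Z -> C. *)
Definition periodic (N : Z) (f : Z -> C) : Prop := forall k : Z, f (k + N)%Z = f k.

(* Main.v *)
Require Import Defs.
From Stdlib Require Import Reals ZArith Setoid Lra.
From Coquelicot Require Import Coquelicot.
Local Open Scope C_scope.
Lemma cexp_add (a b : C) : cexp (a + b) = cexp a * cexp b.
Proof.
  destruct a as [a1 a2], b as [b1 b2]. unfold cexp, Cmult, Cplus; simpl.
  rewrite exp_plus, cos_plus, sin_plus. f_equal; ring.
Qed.

Lemma cexp_nz (a : C) : cexp a <> 0.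
Proof.
  destruct a as [a1 a2]. unfold cexp; simpl. intro E.
  assert (E1 := f_equal fst E). assert (E2 := f_equal snd E). simpl in E1, E2.
  assert (Hp := exp_pos a1).
  assert (cos a2 = 0)%R by (apply (Rmult_eq_reg_l (exp a1)); [rewrite E1; ring | lra]).
  assert (sin a2 = 0)%R by (apply (Rmult_eq_reg_l (exp a1)); [rewrite E2; ring | lra]).
  pose proof (sin2_cos2 a2). unfold Rsqr in *. rewrite H, H0 in H1. lra.
Qed.

Lemma cexp_sub (a b : C) : cexp (a - b) = cexp a / cexp b.
Proof.
  assert (E : cexp a = cexp (a - b) * cexp b).
  { rewrite <- cexp_add. f_equal. ring. }
  rewrite E. field. apply cexp_nz.
Qed.

Lemma mul_nz (u v : C) : u <> 0 -> v <> 0 -> u * v <> 0.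
Proof.
  intros Hu Hv E. apply Hu. replace u with (u * v / v) by (field; auto).
  rewrite E. field. auto.
Qed.

Lemma mul_nz_l (u v : C) : u * v <> 0 -> u <> 0.
Proof. intros H E. apply H. rewrite E. ring. Qed.
Lemma mul_nz_r (u v : C) : u * v <> 0 -> v <> 0.
Proof. intros H E. apply H. rewrite E. ring. Qed.

Lemma diff0 (u v : C) : u - v = 0 -> u = v.
Proof. intro E. replace u with (u - v + v) by ring. rewrite E. ring. Qed.
Lemma diff0' (u v : C) : u = v -> u - v = 0.
Proof. intro E. rewrite E. ring. Qed.

Lemma mul0 (u v : C) : u <> 0 -> u * v = 0 -> v = 0.
Proof. intros Hu E. replace v with (u * v / u) by (field; auto). rewrite E. field; auto. Qed.

Lemma frac_nz (u v : C) : v <> 0 -> u / v - 1 <> 0 -> u - v <> 0.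
Proof. intros Hv H E. apply H. replace u with (u - v + v) by ring. rewrite E. field. auto. Qed.

Lemma frac_nz2 (l u v : C) : v <> 0 -> l + u / v <> 0 -> l * v + u <> 0.
Proof. intros Hv H E. apply H. replace u with (l * v + u - l * v) by ring. rewrite E. field. auto. Qed.

Lemma solveE (l m T H X' T' H' : C) :
  T <> 0 -> H <> 0 -> X' <> 0 -> m*H+X' <> 0 ->
  (T'/X' - 1)*(l + X'/T) = (H'/X' - 1)*(m + X'/H) ->
  H' = X' + (T'-X')*H*(l*T+X')/(T*(m*H+X')).
Proof.
  intros. apply diff0.
  transitivity (- ((T'/X' - 1)*(l + X'/T) - (H'/X' - 1)*(m + X'/H)) * X' * H / (m*H+X')).
  - field. repeat split; auto.
  - rewrite (diff0' _ _ H4). field. auto.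
Qed.

Lemma solveS1 (l m T H X' Zk : C) :
  T <> 0 -> H <> 0 -> l <> m -> l*T+X' <> 0 ->
  (Zk/H - 1)*(l + X'/T) = (Zk/T - 1)*(m + X'/H) ->
  l*T - m*H <> 0 /\ Zk = ((l-m)*H*T + X'*(H-T)) / (l*T - m*H).
Proof.
  intros HT HH Hlm Hn E.
  assert (Ea : (l*T - m*H)*Zk - ((l-m)*H*T + X'*(H-T)) = 0).
  { transitivity (((Zk/H - 1)*(l + X'/T) - (Zk/T - 1)*(m + X'/H)) * H * T).
    - field. split; auto.
    - rewrite (diff0' _ _ E). ring. }
  assert (Ha : l*T - m*H <> 0).
  { intro Ha. rewrite Ha in Ea.
    assert (Eb : (l-m)*H*T + X'*(H-T) = 0).
    { replace ((l-m)*H*T + X'*(H-T)) with (-(0*Zk - ((l-m)*H*T + X'*(H-T)))) by ring.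
      rewrite Ea. ring. }
    assert (Id : m*((l-m)*H*T + X'*(H-T)) + (l*T - m*H)*((l-m)*T+X') = (l-m)*T*(l*T+X')) by ring.
    rewrite Eb, Ha in Id.
    apply (mul_nz ((l-m)*T) (l*T+X')).
    + apply mul_nz; auto. intro E'; apply Hlm; apply diff0; auto.
    + auto.
    rewrite <- Id. ring. }
  split; auto. apply diff0 in Ea. rewrite <- Ea. field. auto.
Qed.

Lemma solveS2 (l m X T H Zp : C) :
  X <> 0 -> Zp <> 0 -> l*(T-X) - m*(H-X) <> 0 ->
  (T/X - 1)*(l + H/Zp) = (H/X - 1)*(m + T/Zp) ->
  Zp = X*(H-T)/(l*(T-X) - m*(H-X)).
Proof.
  intros HX HZ Hc E.
  assert (Ea : (l*(T-X) - m*(H-X))*Zp - X*(H-T) = 0).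
  { transitivity (((T/X - 1)*(l + H/Zp) - (H/X - 1)*(m + T/Zp)) * X * Zp).
    - field. split; auto.
    - rewrite (diff0' _ _ E). ring. }
  apply diff0 in Ea. rewrite <- Ea. field. auto.
Qed.

Lemma equiv_core (l m T H X' T' H' Zk : C) :
  T <> 0 -> H <> 0 -> X' <> 0 -> Zk <> 0 -> m*H+X' <> 0 -> T'-X' <> 0 ->
  (T'/X' - 1)*(l + X'/T) = (H'/X' - 1)*(m + X'/H) ->
  (((Zk/H - 1)*(l + X'/T) = (Zk/T - 1)*(m + X'/H)) <->
   ((T'/X' - 1)*(l + H'/Zk) = (H'/X' - 1)*(m + T'/Zk))) /\
  (l*T - m*H <> 0 -> l*(T'-X') - m*(H'-X') <> 0).
Proof.
  intros HT HH HX HZ Hn HA E.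
  pose proof (solveE _ _ _ _ _ _ _ HT HH HX Hn E) as EH. clear E. subst H'.
  assert (D1 : (Zk/H - 1)*(l + X'/T) - (Zk/T - 1)*(m + X'/H)
     = ((l*T - m*H)*Zk - ((l-m)*H*T + X'*(H-T))) / (H*T)) by (field; split; auto).
  assert (D2 : (T'/X' - 1)*(l + (X' + (T'-X')*H*(l*T+X')/(T*(m*H+X')))/Zk)
       - ((X' + (T'-X')*H*(l*T+X')/(T*(m*H+X')))/X' - 1)*(m + T'/Zk)
     = ((T'-X')/(T*(m*H+X')*Zk)) * ((l*T - m*H)*Zk - ((l-m)*H*T + X'*(H-T))))
     by (field; repeat split; auto).
  assert (NK : (T'-X')/(T*(m*H+X')*Zk) <> 0).
  { intro E. apply HA. replace (T'-X') with ((T'-X')/(T*(m*H+X')*Zk) * (T*(m*H+X')*Zk))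
      by (field; repeat split; auto). rewrite E. ring. }
  split.
  - split; intro E.
    + apply diff0. rewrite D2. apply diff0' in E. rewrite D1 in E.
      assert (E' : (l*T - m*H)*Zk - ((l-m)*H*T + X'*(H-T)) = 0).
      { replace ((l*T - m*H)*Zk - ((l-m)*H*T + X'*(H-T))) with
          (((l*T - m*H)*Zk - ((l-m)*H*T + X'*(H-T))) / (H*T) * (H*T)) by (field; split; auto).
        rewrite E. ring. }
      rewrite E'. ring.
    + apply diff0. rewrite D1. apply diff0' in E. rewrite D2 in E.
      apply mul0 in E; auto. rewrite E. field. split; auto.
  - intros Ha Hc. apply Ha.
    assert (Ec : l*(T'-X') - m*((X' + (T'-X')*H*(l*T+X')/(T*(m*H+X'))) - X')
       = (X'*(T'-X')/(T*(m*H+X'))) * (l*T - m*H)) by (field; split; auto).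
    rewrite Hc in Ec. symmetry in Ec. apply mul0 in Ec; auto.
    intro E0. apply HA. replace (T'-X') with (X'*(T'-X')/(T*(m*H+X')) * (T*(m*H+X'))/X')
      by (field; repeat split; auto). rewrite E0. field. auto.
Qed.

Lemma E12core (l m T H X' T' H' Zk : C) :
  T <> 0 -> H <> 0 -> X' <> 0 -> m*H+X' <> 0 -> l*T - m*H <> 0 ->
  ((l-m)*H*T + X'*(H-T)) <> 0 ->
  H' = X' + (T'-X')*H*(l*T+X')/(T*(m*H+X')) ->
  Zk = ((l-m)*H*T + X'*(H-T)) / (l*T - m*H) ->
  (Zk/H-1)*(l+H'/Zk) = (Zk/T-1)*(m+T'/Zk).
Proof. intros. subst. field. repeat split; auto. Qed.

Lemma E1core (l m X T H X' Zk Zp : C) :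
  X <> 0 -> T <> 0 -> H <> 0 -> l*T - m*H <> 0 ->
  (l*(T-X) - m*(H-X)) <> 0 -> X*(H-T) <> 0 ->
  Zp = X*(H-T)/(l*(T-X) - m*(H-X)) ->
  Zk = ((l-m)*H*T + X'*(H-T)) / (l*T - m*H) ->
  (T/X-1)*(l+X'/T) = (Zk/T-1)*(m+T/Zp) /\
  (H/X-1)*(m+X'/H) = (Zk/H-1)*(l+H/Zp).
Proof.
  intros. assert (H - T <> 0) by (eapply mul_nz_r; eauto).
  subst. split; field; repeat split; auto.
Qed.

Theorem theorem7 (N : Z) (lam mu : C) (x xt xh xht : Z -> C) :
  (1 <= N)%Z ->
  periodic N x -> periodic N xt -> periodic N xh -> periodic N xht ->
  lam <> mu ->
  (forall k : Z,
     (cexp (xt k - x k) - 1) * (lam + cexp (x k - xt (k - 1)%Z)) <> 0) ->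
  (forall k : Z,
     (cexp (xt k - x k) - 1) * (lam + cexp (x (k + 1)%Z - xt k)) <> 0) ->
  (forall k : Z,
     (cexp (xh k - x k) - 1) * (mu + cexp (x (k + 1)%Z - xh k)) <> 0) ->
  (forall k : Z,
     (cexp (xt k - x k) - 1) * (lam + cexp (x k - xt (k - 1)%Z))
     = (cexp (xh k - x k) - 1) * (mu + cexp (x k - xh (k - 1)%Z))) ->
  let S1 := forall k : Z,
     (cexp (xht k - xh k) - 1) * (lam + cexp (x (k + 1)%Z - xt k))
     = (cexp (xht k - xt k) - 1) * (mu + cexp (x (k + 1)%Z - xh k)) in
  let S2 := forall k : Z,
     (cexp (xt (k + 1)%Z - x (k + 1)%Z) - 1) * (lam + cexp (xh (k + 1)%Z - xht k))
     = (cexp (xh (k + 1)%Z - x (k + 1)%Z) - 1) * (mu + cexp (xt (k + 1)%Z - xht k)) in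
  (S1 <-> S2) /\
  ((S1 \/ S2) ->
   forall k : Z,
     (cexp (xt k - x k) - 1) * (lam + cexp (x (k + 1)%Z - xt k))
       = (cexp (xht k - xt k) - 1) * (mu + cexp (xt k - xht (k - 1)%Z)) /\
     (cexp (xh k - x k) - 1) * (mu + cexp (x (k + 1)%Z - xh k))
       = (cexp (xht k - xh k) - 1) * (lam + cexp (xh k - xht (k - 1)%Z)) /\
     (cexp (xht k - xh k) - 1) * (lam + cexp (xh (k + 1)%Z - xht k))
       = (cexp (xht k - xt k) - 1) * (mu + cexp (xt (k + 1)%Z - xht k))).
Proof.
  intros HN px pxt pxh pxht Hlm nd1 nd2 nd3 HE S1 S2.
  subst S1 S2.
  repeat setoid_rewrite cexp_sub. repeat setoid_rewrite cexp_sub in nd2.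
  repeat setoid_rewrite cexp_sub in nd3. repeat setoid_rewrite cexp_sub in HE.
  clear nd1.
  assert (EQk : forall k,
    (((cexp (xht k)/cexp (xh k) - 1)*(lam + cexp (x (k+1)%Z)/cexp (xt k))
       = (cexp (xht k)/cexp (xt k) - 1)*(mu + cexp (x (k+1)%Z)/cexp (xh k))) <->
     ((cexp (xt (k+1)%Z)/cexp (x (k+1)%Z) - 1)*(lam + cexp (xh (k+1)%Z)/cexp (xht k))
       = (cexp (xh (k+1)%Z)/cexp (x (k+1)%Z) - 1)*(mu + cexp (xt (k+1)%Z)/cexp (xht k)))) /\
    (lam*cexp (xt k) - mu*cexp (xh k) <> 0 ->
     lam*(cexp (xt (k+1)%Z) - cexp (x (k+1)%Z)) - mu*(cexp (xh (k+1)%Z) - cexp (x (k+1)%Z)) <> 0)).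
  { intro k. apply equiv_core; try apply cexp_nz.
    - apply frac_nz2; [apply cexp_nz|]. eapply mul_nz_r. apply nd3.
    - apply frac_nz; [apply cexp_nz|]. eapply mul_nz_l. apply (nd2 (k+1)%Z).
    - pose proof (HE (k+1)%Z) as E. replace (k + 1 - 1)%Z with k in E by ring. exact E. }
  assert (HS12 : (forall k,
       (cexp (xht k)/cexp (xh k) - 1)*(lam + cexp (x (k+1)%Z)/cexp (xt k))
       = (cexp (xht k)/cexp (xt k) - 1)*(mu + cexp (x (k+1)%Z)/cexp (xh k))) <->
     (forall k, (cexp (xt (k+1)%Z)/cexp (x (k+1)%Z) - 1)*(lam + cexp (xh (k+1)%Z)/cexp (xht k))
       = (cexp (xh (k+1)%Z)/cexp (x (k+1)%Z) - 1)*(mu + cexp (xt (k+1)%Z)/cexp (xht k)))).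
  { split; intros HS k; apply (proj1 (EQk k)); apply HS. }
  split; [exact HS12|].
  intros HS k.
  assert (HS1 : forall k,
       (cexp (xht k)/cexp (xh k) - 1)*(lam + cexp (x (k+1)%Z)/cexp (xt k))
       = (cexp (xht k)/cexp (xt k) - 1)*(mu + cexp (x (k+1)%Z)/cexp (xh k))).
  { destruct HS as [HS|HS]; [exact HS | apply HS12; exact HS]. }
  clear HS.
  destruct (solveS1 lam mu (cexp (xt k)) (cexp (xh k)) (cexp (x (k+1)%Z)) (cexp (xht k)))
    as [Ha EZ]; try apply cexp_nz; auto.
  { apply frac_nz2; [apply cexp_nz|]. eapply mul_nz_r. apply nd2. }
  destruct (solveS1 lam mu (cexp (xt (k-1)%Z)) (cexp (xh (k-1)%Z)) (cexp (x (k-1+1)%Z)) (cexp (xht (k-1)%Z)))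
    as [Ham _]; try apply cexp_nz; auto.
  { apply frac_nz2; [apply cexp_nz|]. eapply mul_nz_r. apply nd2. }
  destruct (EQk (k-1)%Z) as [EQ Hc].
  specialize (Hc Ham). apply EQ in HS1 as HS2m. clear EQ.
  replace (k - 1 + 1)%Z with k in Hc, HS2m by ring.
  pose proof (solveS2 _ _ _ _ _ _ (cexp_nz _) (cexp_nz _) Hc HS2m) as EZp.
  assert (Hd : cexp (x k) * (cexp (xh k) - cexp (xt k)) <> 0).
  { replace (cexp (x k) * (cexp (xh k) - cexp (xt k))) with
      (cexp (xht (k-1)%Z) * (lam * (cexp (xt k) - cexp (x k)) - mu * (cexp (xh k) - cexp (x k)))).
    - apply mul_nz; auto. apply cexp_nz.
    - rewrite EZp. field. auto. }
  destruct (E1core lam mu (cexp (x k)) (cexp (xt k)) (cexp (xh k)) (cexp (x (k+1)%Z))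
     (cexp (xht k)) (cexp (xht (k-1)%Z))) as [E1 E2]; try apply cexp_nz; auto.
  split; [exact E1|]. split; [exact E2|].
  pose proof (HE (k+1)%Z) as E. replace (k + 1 - 1)%Z with k in E by ring.
  apply (solveE _ _ _ _ _ _ _ (cexp_nz _) (cexp_nz _) (cexp_nz _)) in E.
  2: { apply frac_nz2; [apply cexp_nz|]. eapply mul_nz_r. apply nd3. }
  apply (E12core lam mu (cexp (xt k)) (cexp (xh k)) (cexp (x (k+1)%Z))); try apply cexp_nz; auto.
  - apply frac_nz2; [apply cexp_nz|]. eapply mul_nz_r. apply nd3.
  - intro Hb. apply (cexp_nz (xht k)). rewrite EZ, Hb. field. auto.
Qed.
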